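(* Let $E$ be a free $A_n(K)$-module with basis $e_1,\dots,e_m$, let $N$ be an $A_n(K)$-submodule of $E$, and let $G=\{g_1,\dots,g_r\}$ be an $(x,\partial)$-Gröbner basis of $N$. Then: (i) for $f\in E$, $f\in N$ if and only if $f$ $(x,\partial)$-reduces to $0$ modulo $G$; (ii) if $f\in N$ and $f$ is $(x,\partial)$-reduced with respect to $G$, then $f=0$.
   Context: $K$ is a field of characteristic zero and $A_n(K)$ is the Weyl algebra: the $K$-algebra generated by $x_1,\dots,x_n,\partial_1,\dots,\partial_n$ in which all pairs of generators commute except that $\partial_ix_i=x_i\partial_i+1$. $\Theta$ denotes the set of monomials $x^\alpha\partial^\beta=x_1^{\alpha_1}\cdots x_n^{\alpha_n}\partial_1^{\beta_1}\cdots\partial_n^{\beta_n}$ ($\alpha,\beta\in\mathbf N^n$), a $K$-basis of $A_n(K)$; $ord_x(x^\alpha\partial^\beta)=|\alpha|$, $ord_\partial(x^\alpha\partial^\beta)=|\beta|$. For $\theta=x^\alpha\partial^\beta$, $\theta'=x^\gamma\partial^\delta$: $\theta\mid\theta'$ if $\alpha\le\gamma$ and $\beta\le\delta$ componentwise, and then $\theta'/\theta:=x^{\gamma-\alpha}\partial^{\delta-\beta}$. Terms are the elements $\theta e_i$ ($\theta\in\Theta$); they form a $K$-basis of $E$, and each nonzero $f$ is uniquely a combination of distinct terms with nonzero coefficients (the terms appearing in $f$). $ord_x(\theta e_i)=ord_x\theta$, $ord_\partial(\theta e_i)=ord_\partial\theta$. For $\theta=x^\alpha\partial^\beta$ and a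 term $w=x^\gamma\partial^\delta e_i$, $\theta w$ denotes the term $x^{\alpha+\gamma}\partial^{\beta+\delta}e_i$; for $f\in E$, $\theta f$ is the module action. $w=\theta'e_i$ is divisible by $v=\theta e_j$ ($v\mid w$) if $i=j$ and $\theta\mid\theta'$; then $w/v:=\theta'/\theta$. Orders: $x^\alpha\partial^\beta<_x x^\gamma\partial^\delta$ iff $(|\alpha|,|\beta|,\alpha,\beta)$ is lexicographically smaller than $(|\gamma|,|\delta|,\gamma,\delta)$; $x^\alpha\partial^\beta<_\partial x^\gamma\partial^\delta$ iff $(|\beta|,|\alpha|,\beta,\alpha)$ is lexicographically smaller than $(|\delta|,|\gamma|,\delta,\gamma)$. On terms, $\theta e_i<\theta'e_j$ iff $\theta<\theta'$, or $\theta=\theta'$ and $i<j$ (for either order). For nonzero $f$, $u_f$ ($x$-leader) and $v_f$ ($\partial$-leader) are the $<_x$-greatest and $<_\partial$-greatest terms appearing in $f$; $lc_x(f)$ is the coefficient of $u_f$. $f$ is $(x,\partial)$-reduced w.r.t. nonzero $g$ if $f$ contains no term $\theta u_g$ ($\theta\in\Theta$) with $ord_\partial(\theta v_g)\le ord_\partial v_f$; reduced w.r.t. a set if reduced w.r.t. each element. One-step reduction: for $g\ne0$, $f\to h$ modulo $g$ if $f$ contains a term $w$ with coefficient $a\neq0$ such that $u_g\mid w$, $ord_\partial((w/u_g)v_g)\le ord_\partial v_f$, and $h=f-a\,lc_x(g)^{-1}(w/u_g)g$. $f$ $(x,\partial)$-reduces to $h$ modulo $G$ if $h$ is obtained from $f$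 by a finite sequence of such one-step reductions with elements of $G$. With $d(f)=ord_\partial v_f-ord_\partial u_f$ for $f\ne0$: a finite set $G$ of nonzero elements of $N$ is an $(x,\partial)$-Gröbner basis of $N$ if for every nonzero $f\in N$ some $g_i\in G$ satisfies $u_{g_i}\mid u_f$ and $d(g_i)\le d(f)$. *)

(* Defs.v *)
From HB Require Import structures.
From mathcomp Require Import all_boot all_order all_algebra.
From mathcomp Require Import finmap.
From mathcomp.multinomials Require Import monalg.

Set Implicit Arguments.
Unset Strict Implicit.
Unset Printing Implicit Defensive.

Import Order.TTheory GRing.Theory Num.Theory.
Local Open Scope ring_scope.

Definition expv (n : nat) := n.-tuple nat.
(* Monomials  x^alpha d^beta  of Theta, encoded as (alpha, beta). *)
Definition mon (n : nat) := (expv n * expv n)%type.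
(* Terms  x^alpha d^beta e_i  with i : 'I_m (e_1..e_m indexed by 'I_m). *)
Definition term (n m : nat) := (mon n * 'I_m)%type.

(* The free module E = A_n(K)^m, represented by its K-basis of terms:
   an element is a finitely supported K-valued function on terms. *)
Definition E (K : fieldType) (n m : nat) := {malg K[term n m]}.
(* The Weyl algebra A_n(K), as a K-vector space with basis Theta. *)
Definition weyl (K : fieldType) (n : nat) := {malg K[mon n]}.

Section Weyl.
Variables (K : fieldType) (n m : nat).
Implicit Types (f g h : E K n m) (t u v w : term n m) (th : mon n).

Definition addv (a b : expv n) : expv n := [tuple (tnth a k + tnth b k)%N | k < n].
Definition subv (a b : expv n) : expv n := [tuple (tnth a k - tnth b k)%N | k < n].
Definition unitv (j : 'I_n) : expv n := [tuple (k == j : nat) | k < n].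
Definition lev (a b : expv n) : bool := [forall k, (tnth a k <= tnth b k)%N].
Definition absv (a : expv n) : nat := (\sum_(k < n) tnth a k)%N.

(* Action of the generators x_j and d_j on a basis term x^a d^b e_i,
   using  d_j x^a d^b = x^a d^(b+1_j) + a_j x^(a-1_j) d^b. *)
Definition xgen (j : 'I_n) t : E K n m :=
  << ((addv t.1.1 (unitv j), t.1.2), t.2) >>.
Definition dgen (j : 'I_n) t : E K n m :=
  << ((t.1.1, addv t.1.2 (unitv j)), t.2) >>
  + (tnth t.1.1 j)%:R *: << ((subv t.1.1 (unitv j), t.1.2), t.2) >>.

Definition linext (phi : term n m -> E K n m) f : E K n m :=
  \sum_(t <- msupp f) f@_t *: phi t.

Definition dpow (b : expv n) f : E K n m :=
  foldr (fun j acc => iter (tnth b j) (linext (dgen j)) acc) f (enum 'I_n).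
Definition xpow (a : expv n) f : E K n m :=
  foldr (fun j acc => iter (tnth a j) (linext (xgen j)) acc) f (enum 'I_n).

Definition mact th f : E K n m := xpow th.1 (dpow th.2 f).

Definition wact (P : weyl K n) f : E K n m :=
  \sum_(th <- msupp P) P@_th *: mact th f.

Definition is_submodule (N : E K n m -> Prop) : Prop :=
  [/\ N 0, (forall f g, N f -> N g -> N (f + g))
    & (forall (P : weyl K n) f, N f -> N (wact P f))].

Definition ordx t : nat := absv t.1.1.
Definition ordd t : nat := absv t.1.2.

Definition tmul th t : term n m := ((addv th.1 t.1.1, addv th.2 t.1.2), t.2).
Definition tdvd v w : bool := [&& v.2 == w.2, lev v.1.1 w.1.1 & lev v.1.2 w.1.2].
Definition tquot w v : mon n := (subv w.1.1 v.1.1, subv w.1.2 v.1.2).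

Fixpoint lexlt (s1 s2 : seq nat) : bool :=
  match s1, s2 with
  | x :: s, y :: s' => (x < y)%N || ((x == y) && lexlt s s')
  | [::], _ :: _ => true
  | _, _ => false
  end.

Definition xkey t : seq nat :=
  [:: ordx t; ordd t] ++ tval t.1.1 ++ tval t.1.2 ++ [:: nat_of_ord t.2].
Definition dkey t : seq nat :=
  [:: ordd t; ordx t] ++ tval t.1.2 ++ tval t.1.1 ++ [:: nat_of_ord t.2].

Definition xlt t t' : bool := lexlt (xkey t) (xkey t').
Definition dlt t t' : bool := lexlt (dkey t) (dkey t').

Definition is_xlead f u : Prop :=
  u \in msupp f /\ forall t, t \in msupp f -> t != u -> xlt t u.
Definition is_dlead f v : Prop :=
  v \in msupp f /\ forall t, t \in msupp f -> t != v -> dlt t v.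

Definition xd_reduced f g : Prop :=
  forall ug vg vf, is_xlead g ug -> is_dlead g vg -> is_dlead f vf ->
    ~ exists th, tmul th ug \in msupp f /\ (ordd (tmul th vg) <= ordd vf)%N.

Definition xd_reduced_set f (G : seq (E K n m)) : Prop :=
  forall g, g \in G -> xd_reduced f g.

Definition xd_step g f h : Prop :=
  g != 0 /\
  exists ug vg vf w, [/\ is_xlead g ug, is_dlead g vg & is_dlead f vf] /\
    [/\ w \in msupp f, tdvd ug w,
    (ordd (tmul (tquot w ug) vg) <= ordd vf)%N &
    h = f - (f@_w * (g@_ug)^-1) *: mact (tquot w ug) g].

Inductive xd_reduces (G : seq (E K n m)) : E K n m -> E K n m -> Prop :=
  | xd_red_refl f : xd_reduces G f f
  | xd_red_step f f' h g : g \in G -> xd_step g f f' -> xd_reduces G f' h ->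
      xd_reduces G f h.

Definition dval u v : int := (ordd v)%:Z - (ordd u)%:Z.

Definition is_xd_groebner (N : E K n m -> Prop) (G : seq (E K n m)) : Prop :=
  (forall g, g \in G -> g != 0 /\ N g) /\
  forall f, N f -> f != 0 ->
    exists2 g, g \in G &
      forall ug vg uf vf, is_xlead g ug -> is_dlead g vg ->
        is_xlead f uf -> is_dlead f vf ->
        tdvd ug uf /\ (dval ug vg <= dval uf vf)%R.

End Weyl.

(* Main.v *)
Require Import Defs.
From mathcomp Require Import all_boot all_order all_algebra.
From mathcomp Require Import finmap.
From mathcomp.multinomials Require Import monalg.
From mathcomp Require Import zify.
Set Implicit Arguments.
Unset Strict Implicit.
Unset Printing Implicit Defensive.
Import Order.TTheory GRing.Theory Num.Theory.
Import Defs.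

Lemma lexlt_irr s : lexlt s s = false.
Proof. by elim: s => //= x s ->; rewrite ltnn eqxx. Qed.

Lemma lexlt_trans a b c : lexlt a b -> lexlt b c -> lexlt a c.
Proof.
elim: a b c => [|x a IH] [|y b] [|z c] //=.
case/orP=> [lxy|/andP[/eqP<- ab]]; case/orP=> [lyz|/andP[/eqP<- bc]].
- by rewrite (ltn_trans lxy lyz).
- by rewrite lxy.
- by rewrite lyz.
- by rewrite eqxx (IH _ _ ab bc) orbT.
Qed.

Lemma lexlt_total a b : size a = size b -> a != b -> lexlt a b || lexlt b a.
Proof.
elim: a b => [|x a IH] [|y b] //= [] sab.
rewrite eqseq_cons negb_and; case: (ltngtP x y) => //= exy; subst y.
by move=> h; apply: IH.
Qed.

Definition zadd (s d : seq nat) := [seq (p.1 + p.2)%N | p <- zip s d].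

Lemma lexlt_zadd s1 s2 d : size s1 = size d -> size s2 = size d ->
  lexlt s1 s2 -> lexlt (zadd s1 d) (zadd s2 d).
Proof.
elim: s1 s2 d => [|x s IH] [|y s'] [|e d] //= [] h1 [] h2.
rewrite ltn_add2r eqn_add2r.
case/orP=> [->//|/andP[-> h]]; by rewrite (IH _ _ h1 h2 h) orbT.
Qed.

Lemma zadd_cat s s' d d' : size s = size d ->
  zadd (s ++ s') (d ++ d') = zadd s d ++ zadd s' d'.
Proof. by move=> h; rewrite /zadd zip_cat // map_cat. Qed.

Lemma zadd_nseq0 s : zadd s (nseq (size s) 0%N) = s.
Proof. by rewrite /zadd; elim: s => //= x s ->; rewrite addn0. Qed.

Definition lexR (a b : seq nat) := size a = size b /\ lexlt a b.

Lemma lexR_acc k s : size s = k -> Acc lexR s.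
Proof.
elim: k s => [|k IH] [|x s] hs.
- constructor=> a [_ ha]; by case: a ha.
- discriminate.
- discriminate.
move: hs => [] hs.
have accs := IH s hs.
elim/ltn_ind: x s hs accs => x IHx s hs accs.
elim: accs hs => s0 _ IHs hs.
constructor=> a. case: a => [|y a]; first by move=> [h _]; discriminate h.
move=> [] [] ha /orP [lyx|/andP[/eqP eyx h]].
  apply: (IHx y lyx a); first by rewrite ha.
  by apply: IH; rewrite ha.
rewrite eyx; apply: IHs; last by rewrite ha.
by split.
Qed.

Section Terms.
Variables (n m : nat).
Implicit Types (t u : term n m).

Lemma size_xkey t : size (xkey t) = (2 + n + n + 1)%N.
Proof. by rewrite /xkey /= !size_cat !size_tuple /=; lia. Qed.
Lemma size_dkey t : size (dkey t) = (2 + n + n + 1)%N.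
Proof. by rewrite /dkey /= !size_cat !size_tuple /=; lia. Qed.

Lemma cat_inj_size (T : eqType) (a b c d : seq T) : size a = size c ->
  a ++ b = c ++ d -> a = c /\ b = d.
Proof.
move=> hs e; have := congr1 (take (size a)) e; have := congr1 (drop (size a)) e.
by rewrite !drop_size_cat // !take_size_cat.
Qed.

Lemma xkey_inj t t' : xkey t = xkey t' -> t = t'.
Proof.
case: t => [[a b] i]; case: t' => [[a' b'] i'].
rewrite /xkey /= => -[_ _] /cat_inj_size [] ; first by rewrite !size_tuple.
move/val_inj=> -> /cat_inj_size [] ; first by rewrite !size_tuple.
by move/val_inj=> -> [] /val_inj ->.
Qed.

Lemma dkey_inj t t' : dkey t = dkey t' -> t = t'.
Proof.
case: t => [[a b] i]; case: t' => [[a' b'] i'].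
rewrite /dkey /= => -[_ _] /cat_inj_size [] ; first by rewrite !size_tuple.
move/val_inj=> -> /cat_inj_size [] ; first by rewrite !size_tuple.
by move/val_inj=> -> [] /val_inj ->.
Qed.

Lemma xlt_irr t : xlt t t = false. Proof. exact: lexlt_irr. Qed.
Lemma xlt_trans t1 t2 t3 : xlt t1 t2 -> xlt t2 t3 -> xlt t1 t3.
Proof. exact: lexlt_trans. Qed.
Lemma xlt_total t t' : t != t' -> xlt t t' || xlt t' t.
Proof.
move=> h; apply: lexlt_total; first by rewrite !size_xkey.
by apply: contra h => /eqP /xkey_inj ->.
Qed.
Lemma dlt_irr t : dlt t t = false. Proof. exact: lexlt_irr. Qed.
Lemma dlt_trans t1 t2 t3 : dlt t1 t2 -> dlt t2 t3 -> dlt t1 t3.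
Proof. exact: lexlt_trans. Qed.
Lemma dlt_total t t' : t != t' -> dlt t t' || dlt t' t.
Proof.
move=> h; apply: lexlt_total; first by rewrite !size_dkey.
by apply: contra h => /eqP /dkey_inj ->.
Qed.

Lemma xlt_acc_aux l : Acc lexR l -> forall t : term n m, xkey t = l -> Acc (@xlt n m) t.
Proof.
elim=> l0 _ IH t e.
constructor=> t' lt; apply: (IH (xkey t')); last by [].
by split; [rewrite -e !size_xkey | rewrite -e].
Qed.

Lemma xlt_acc t : Acc (@xlt n m) t.
Proof.
apply: (@xlt_acc_aux (xkey t)); last by [].
by apply: (@lexR_acc (2 + n + n + 1)%N); rewrite size_xkey.
Qed.

End Terms.

Section Vec.
Variable n : nat.
Implicit Types a b : expv n.

Lemma tnth_addv a b i : tnth (addv a b) i = (tnth a i + tnth b i)%N.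
Proof. by rewrite tnth_mktuple. Qed.
Lemma tnth_subv a b i : tnth (subv a b) i = (tnth a i - tnth b i)%N.
Proof. by rewrite tnth_mktuple. Qed.
Lemma tnth_unitv (j i : 'I_n) : tnth (unitv j) i = (i == j) :> nat.
Proof. by rewrite tnth_mktuple. Qed.

Lemma absv_addv a b : absv (addv a b) = (absv a + absv b)%N.
Proof. by rewrite /absv -big_split; apply: eq_bigr => i _; rewrite tnth_addv. Qed.

Lemma absv_unitv (j : 'I_n) : absv (unitv j) = 1%N.
Proof.
rewrite /absv (bigD1 j) //= big1 ?tnth_unitv ?eqxx // => i /negPf.
by rewrite tnth_unitv => ->.
Qed.

Lemma absv_subv a b : lev b a -> absv (subv a b) = (absv a - absv b)%N.
Proof.
move=> /forallP h.
have e : absv a = (absv (subv a b) + absv b)%N.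
  rewrite /absv -big_split; apply/eq_bigr => i _.
  by rewrite tnth_subv /= subnK.
by rewrite e addnK.
Qed.

Lemma tval_addv a b : tval (addv a b) = zadd (tval a) (tval b).
Proof.
apply: (@eq_from_nth _ 0%N).
  by rewrite /zadd size_map size_zip !size_tuple minnn.
move=> i; rewrite size_tuple => hi.
rewrite /zadd (nth_map (0,0)%N); last by rewrite size_zip !size_tuple minnn.
rewrite nth_zip ?size_tuple //=.
have := tnth_addv a b (Ordinal hi); rewrite !(tnth_nth 0%N) /= => ->.
by [].
Qed.

Lemma addvA (a b c : expv n) : addv a (addv b c) = addv (addv a b) c.
Proof. by apply: eq_from_tnth => i; rewrite !tnth_addv addnA. Qed.

End Vec.

Lemma zadd_nseq0' s k : size s = k -> zadd s (nseq k 0%N) = s.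
Proof. by move=> <-; apply: zadd_nseq0. Qed.

Lemma zadd_cons a s b d : zadd (a :: s) (b :: d) = (a + b)%N :: zadd s d.
Proof. by []. Qed.

Section Shift.
Variables (n m : nat).
Implicit Types (t u : term n m).

Definition dsh (j : 'I_n) t : term n m := ((t.1.1, addv t.1.2 (unitv j)), t.2).
Definition xsh (j : 'I_n) t : term n m := ((addv t.1.1 (unitv j), t.1.2), t.2).
Definition xm (j : 'I_n) t : term n m := ((subv t.1.1 (unitv j), t.1.2), t.2).

Definition dvec (j : 'I_n) := [:: 0; 1]%N ++ nseq n 0%N ++ tval (unitv j) ++ [:: 0%N].
Definition xvec (j : 'I_n) := [:: 1; 0]%N ++ tval (unitv j) ++ nseq n 0%N ++ [:: 0%N].

Lemma size_dvec j : size (dvec j) = (2 + n + n + 1)%N.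
Proof. by rewrite /dvec !size_cat size_nseq size_tuple /=; lia. Qed.
Lemma size_xvec j : size (xvec j) = (2 + n + n + 1)%N.
Proof. by rewrite /xvec !size_cat size_nseq size_tuple /=; lia. Qed.

Lemma xkey_dsh j t : xkey (dsh j t) = zadd (xkey t) (dvec j).
Proof.
rewrite /xkey /dvec /ordx /ordd /= absv_addv absv_unitv tval_addv !zadd_cons.
rewrite zadd_cat ?size_tuple ?size_nseq // zadd_cat ?size_tuple ?size_map ?size_enum_ord //.
rewrite zadd_nseq0' ?size_tuple // !addn0 addn1 zadd_cons addn0 //.
by rewrite card_ord.
Qed.

Lemma xkey_xsh j t : xkey (xsh j t) = zadd (xkey t) (xvec j).
Proof.
rewrite /xkey /xvec /ordx /ordd /= absv_addv absv_unitv tval_addv !zadd_cons.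
rewrite zadd_cat ?size_tuple ?size_map ?size_enum_ord ?card_ord // zadd_cat ?size_tuple ?size_nseq //.
by rewrite zadd_nseq0' ?size_tuple // !addn0 addn1 zadd_cons addn0.
Qed.

Lemma xlt_dsh j t t' : xlt t t' -> xlt (dsh j t) (dsh j t').
Proof.
by rewrite /xlt !xkey_dsh => h; apply: lexlt_zadd => //; rewrite size_xkey size_dvec.
Qed.

Lemma xlt_xsh j t t' : xlt t t' -> xlt (xsh j t) (xsh j t').
Proof.
by rewrite /xlt !xkey_xsh => h; apply: lexlt_zadd => //; rewrite size_xkey size_xvec.
Qed.

Lemma lev_unitv (j : 'I_n) (a : expv n) : (0 < tnth a j)%N -> lev (unitv j) a.
Proof.
move=> h; apply/forallP => i; rewrite tnth_unitv.
by case: eqP => [->|] //.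
Qed.

Lemma xlt_xm_dsh j t : (0 < tnth t.1.1 j)%N -> xlt (xm j t) (dsh j t).
Proof.
move=> h; rewrite /xlt /xkey /= /ordx /= absv_subv ?lev_unitv // absv_unitv.
have h' : (0 < absv t.1.1)%N.
  rewrite /absv (bigD1 j) //=; exact: (leq_trans h (leq_addr _ _)).
have -> : (absv t.1.1 - 1 < absv t.1.1)%N by lia.
by [].
Qed.

End Shift.

Section Lead.
Variables (K : fieldType) (n m : nat).
Local Open Scope ring_scope.
Implicit Types (f g h : E K n m) (t u : term n m).

Definition lead f u (c : K) :=
  f@_u = c /\ forall t, t != u -> ~~ xlt t u -> f@_t = 0.

Lemma mcoeff_linext (phi : term n m -> E K n m) f t' :
  (linext phi f)@_t' = \sum_(t <- msupp f) f@_t * (phi t)@_t'.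
Proof.
rewrite /linext raddf_sum; apply: eq_bigr => t _; exact: mcoeffZ.
Qed.

Lemma sum_single f (F : term n m -> K) u :
  (forall t, t \in msupp f -> t != u -> F t = 0) ->
  (u \notin msupp f -> F u = 0) ->
  \sum_(t <- msupp f) F t = F u.
Proof.
move=> h0 hu; case: (boolP (u \in msupp f)) => uin.
  rewrite (bigD1_seq u) //=; last exact: fset_uniq.
  rewrite big_seq_cond big1 ?addr0 // => t /andP[tin tu]; exact: h0.
rewrite hu // big1_seq // => t tin; apply: h0 => //.
by apply: contraNneq uin => <-.
Qed.

Lemma lead_supp f u c t : lead f u c -> t \in msupp f -> t != u -> xlt t u.
Proof.
move=> [_ h] tin tu; apply/negPn/negP => nlt.
by move: tin; rewrite -mcoeff_neq0 h // eqxx.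
Qed.

Lemma lead_linext (phi : term n m -> E K n m) (s : term n m -> term n m) f u c :
  (forall t, lead (phi t) (s t) 1) ->
  (forall t t', xlt t t' -> xlt (s t) (s t')) ->
  lead f u c -> lead (linext phi f) (s u) c.
Proof.
move=> hphi hs hf; split.
  rewrite mcoeff_linext (@sum_single f _ u).
  - by case: (hphi u) => -> _; rewrite mulr1; case: hf.
  - move=> t tin tu; have lt := hs _ _ (lead_supp hf tin tu).
    case: (hphi t) => _ h; rewrite h.
    + by rewrite mulr0.
    + apply/negP => /eqP e; move: lt; rewrite e xlt_irr; exact.
    + apply/negP => lt'; have := xlt_trans lt lt'; rewrite xlt_irr; exact.
  - move=> uout; by rewrite (mcoeff_outdom uout) mul0r.
move=> t' t'u nlt; rewrite mcoeff_linext big1_seq; first by [].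
move=> t /andP[_ tin].
case: (eqVneq t u) => [->|tu].
  case: (hphi u) => _ h; rewrite h; [by rewrite mulr0|exact: t'u|exact: nlt].
have lt := hs _ _ (lead_supp hf tin tu).
case: (hphi t) => _ h; rewrite h.
- by rewrite mulr0.
- apply/negP => /eqP e; move: nlt; rewrite e lt; exact.
- apply/negP => lt'; move: nlt; rewrite (xlt_trans lt' lt); exact.
Qed.
Lemma lead_iter (phi : term n m -> E K n m) (s : term n m -> term n m) k f u c :
  (forall t, lead (phi t) (s t) 1) ->
  (forall t t', xlt t t' -> xlt (s t) (s t')) ->
  lead f u c -> lead (iter k (linext phi) f) (iter k s u) c.
Proof.
move=> hphi hs; elim: k => [|k IH] hf; first exact: hf.
exact: lead_linext hphi hs (IH hf).
Qed.

Lemma lead_foldr (phi : 'I_n -> term n m -> E K n m) (s : 'I_n -> term n m -> term n m)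
    (b : 'I_n -> nat) l f u c :
  (forall j t, lead (phi j t) (s j t) 1) ->
  (forall j t t', xlt t t' -> xlt (s j t) (s j t')) ->
  lead f u c ->
  lead (foldr (fun j acc => iter (b j) (linext (phi j)) acc) f l)
       (foldr (fun j acc => iter (b j) (s j) acc) u l) c.
Proof.
move=> hphi hs hf; elim: l => [|j l IH]; first exact: hf.
exact: lead_iter (hphi j) (hs j) IH.
Qed.

End Lead.
Section Lead2.
Variables (K : fieldType) (n m : nat).
Local Open Scope ring_scope.

Lemma mcZ (c : K) (g : E K n m) t : (c *: g)@_t = c * g@_t.
Proof. exact: mcoeffZ. Qed.

Lemma mcU (k k' : term n m) : (<< k >> : E K n m)@_k' = (k == k')%:R.
Proof. exact: mcoeffU. Qed.

Lemma mc_dgen j (t t' : term n m) : (dgen K j t)@_t' =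
  (((t.1.1, addv t.1.2 (unitv j)), t.2) == t')%:R
  + (tnth t.1.1 j)%:R * (((subv t.1.1 (unitv j), t.1.2), t.2) == t')%:R.
Proof.
rewrite /dgen.
transitivity ((<< ((t.1.1, addv t.1.2 (unitv j)), t.2) >> : E K n m)@_t'
   + ((tnth t.1.1 j)%:R *: (<< ((subv t.1.1 (unitv j), t.1.2), t.2) >> : E K n m))@_t').
  exact: mcoeffD.
congr (_ + _); first exact: mcoeffU.
transitivity ((tnth t.1.1 j)%:R * (<< ((subv t.1.1 (unitv j), t.1.2), t.2) >> : E K n m)@_t').
  exact: mcoeffZ.
congr (_ * _); exact: mcoeffU.
Qed.

Lemma lead_dgen j (t : term n m) : lead (dgen K j t) (dsh j t) 1.
Proof.
split.
  rewrite mc_dgen /dsh eqxx mulr1n.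
  case: (posnP (tnth t.1.1 j)) => [->|pos]; first by rewrite mul0r addr0.
  have lt := xlt_xm_dsh pos.
  have -> : (((subv t.1.1 (unitv j), t.1.2), t.2) == ((t.1.1, addv t.1.2 (unitv j)), t.2)) = false.
    apply/negP => /eqP e; move: lt; rewrite /xm /dsh e xlt_irr; exact.
  rewrite mulr0 addr0; reflexivity.
move=> t' t'u nlt; rewrite mc_dgen.
have -> : (((t.1.1, addv t.1.2 (unitv j)), t.2) == t') = false.
  apply/negP => /eqP e; move: t'u; rewrite -e; move=> /eqP; apply; reflexivity.
rewrite add0r.
case: (posnP (tnth t.1.1 j)) => [->|pos]; first by rewrite mul0r.
have lt := xlt_xm_dsh pos.
have -> : (((subv t.1.1 (unitv j), t.1.2), t.2) == t') = false.
  apply/negP => /eqP e; move: nlt; rewrite -e; rewrite /xm in lt; rewrite lt; exact.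
rewrite mulr0; reflexivity.
Qed.

Lemma lead_xgen j (t : term n m) : lead (xgen K j t) (xsh j t) 1.
Proof.
split; first exact: mcoeffUU.
move=> t' t'u _; rewrite /xgen mcoeffU.
have -> : (((addv t.1.1 (unitv j), t.1.2), t.2) == t') = false.
  apply/negP => /eqP e; move: t'u; rewrite -e; move=> /eqP; apply; reflexivity.
exact: mulr0n.
Qed.
End Lead2.

Section Pow.
Variables (K : fieldType) (n m : nat).
Local Open Scope ring_scope.

Lemma iter_dsh k j (t : term n m) :
  [/\ (iter k (dsh j) t).1.1 = t.1.1, (iter k (dsh j) t).2 = t.2 &
   forall i, tnth (iter k (dsh j) t).1.2 i = (tnth t.1.2 i + k * (i == j))%N].
Proof.
elim: k => [|k [IH1 IH2 IH3]]; first by split=> // i; rewrite mul0n addn0.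
split=> //= i; rewrite tnth_addv IH3 tnth_unitv mulSn; lia.
Qed.

Lemma iter_xsh k j (t : term n m) :
  [/\ (iter k (xsh j) t).1.2 = t.1.2, (iter k (xsh j) t).2 = t.2 &
   forall i, tnth (iter k (xsh j) t).1.1 i = (tnth t.1.1 i + k * (i == j))%N].
Proof.
elim: k => [|k [IH1 IH2 IH3]]; first by split=> // i; rewrite mul0n addn0.
split=> //= i; rewrite tnth_addv IH3 tnth_unitv mulSn; lia.
Qed.

Lemma foldr_dsh (b : expv n) l (t : term n m) :
  let r := foldr (fun j acc => iter (tnth b j) (dsh j) acc) t l in
  [/\ r.1.1 = t.1.1, r.2 = t.2 &
   forall i, tnth r.1.2 i = (tnth t.1.2 i + count_mem i l * tnth b i)%N].
Proof.
elim: l => [|j l [IH1 IH2 IH3]] /=; first by split=> // i; rewrite mul0n addn0.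
case: (iter_dsh (tnth b j) j (foldr (fun j acc => iter (tnth b j) (dsh j) acc) t l))
  => h1 h2 h3.
split; [by rewrite h1 IH1 | by rewrite h2 IH2 | move=> i].
rewrite h3 IH3 mulnDl eq_sym; case: (eqVneq i j) => [->|_]; rewrite /= ?mul1n ?muln1 ?mul0n ?muln0; lia.
Qed.

Lemma foldr_xsh (b : expv n) l (t : term n m) :
  let r := foldr (fun j acc => iter (tnth b j) (xsh j) acc) t l in
  [/\ r.1.2 = t.1.2, r.2 = t.2 &
   forall i, tnth r.1.1 i = (tnth t.1.1 i + count_mem i l * tnth b i)%N].
Proof.
elim: l => [|j l [IH1 IH2 IH3]] /=; first by split=> // i; rewrite mul0n addn0.
case: (iter_xsh (tnth b j) j (foldr (fun j acc => iter (tnth b j) (xsh j) acc) t l))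
  => h1 h2 h3.
split; [by rewrite h1 IH1 | by rewrite h2 IH2 | move=> i].
rewrite h3 IH3 mulnDl eq_sym; case: (eqVneq i j) => [->|_]; rewrite /= ?mul1n ?muln1 ?mul0n ?muln0; lia.
Qed.

Lemma count_enum_ord (i : 'I_n) : count_mem i (enum 'I_n) = 1%N.
Proof. by rewrite count_uniq_mem ?enum_uniq // mem_enum. Qed.

Lemma foldr_dsh_enum (b : expv n) (t : term n m) :
  foldr (fun j acc => iter (tnth b j) (dsh j) acc) t (enum 'I_n)
  = ((t.1.1, addv b t.1.2), t.2).
Proof.
case: (foldr_dsh b (enum 'I_n) t).
move: (foldr _ _ _) => [[a c] i] /= -> -> h.
congr (_, _, _); apply: eq_from_tnth => k.
by rewrite h tnth_addv count_enum_ord mul1n addnC.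
Qed.

Lemma foldr_xsh_enum (b : expv n) (t : term n m) :
  foldr (fun j acc => iter (tnth b j) (xsh j) acc) t (enum 'I_n)
  = ((addv b t.1.1, t.1.2), t.2).
Proof.
case: (foldr_xsh b (enum 'I_n) t).
move: (foldr _ _ _) => [[a c] i] /= -> -> h.
congr (_, _, _); apply: eq_from_tnth => k.
by rewrite h tnth_addv count_enum_ord mul1n addnC.
Qed.

Lemma lead_dpow (b : expv n) (f : E K n m) u c :
  lead f u c -> lead (dpow b f) ((u.1.1, addv b u.1.2), u.2) c.
Proof.
move=> hf; rewrite -foldr_dsh_enum.
apply: (lead_foldr (phi := fun j => dgen K j)) hf.
- move=> j t; exact: lead_dgen.
- move=> j t t'; exact: xlt_dsh.
Qed.

Lemma lead_xpow (a : expv n) (f : E K n m) u c :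
  lead f u c -> lead (xpow a f) ((addv a u.1.1, u.1.2), u.2) c.
Proof.
move=> hf; rewrite -foldr_xsh_enum.
apply: (lead_foldr (phi := fun j => xgen K j)) hf.
- move=> j t; exact: lead_xgen.
- move=> j t t'; exact: xlt_xsh.
Qed.

Lemma lead_mact (th : mon n) (f : E K n m) u c :
  lead f u c -> lead (mact th f) (tmul th u) c.
Proof.
move=> hf; have := lead_xpow th.1 (lead_dpow th.2 hf).
by rewrite /tmul /mact.
Qed.

End Pow.

Lemma exists_max (T : eqType) (lt : rel T) (s : seq T) :
  (forall x, lt x x = false) ->
  (forall x y z, lt x y -> lt y z -> lt x z) ->
  (forall x y, x != y -> lt x y || lt y x) ->
  s != [::] -> exists2 u, u \in s & forall t, t \in s -> t != u -> lt t u.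
Proof.
move=> irr tr tot; elim: s => [//|x s IH] _.
case: (eqVneq s [::]) => [->|ne].
  by exists x; rewrite ?inE // => t; rewrite inE => ->.
case: (IH ne) => u uin hu.
case: (eqVneq x u) => [exu|nxu].
  exists u; first by rewrite inE uin orbT.
  move=> t; rewrite inE; case/orP => [/eqP->|]; first by rewrite exu eqxx.
  exact: hu.
case/orP: (tot _ _ nxu) => [lxu|lux].
  exists u; first by rewrite inE uin orbT.
  move=> t; rewrite inE; case/orP => [/eqP-> _ //|]; exact: hu.
exists x; first by rewrite inE eqxx.
move=> t; rewrite inE; case/orP => [/eqP->|tin tx]; first by rewrite eqxx.
case: (eqVneq t u) => [->//|tu]; exact: tr (hu _ tin tu) lux.
Qed.

Section Main.
Variables (K : fieldType) (n m : nat).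
Local Open Scope ring_scope.
Implicit Types (f g h : E K n m).

Lemma msupp_neq f : f != 0 -> (msupp f : seq (term n m)) != [::].
Proof.
move=> nz; apply: contra nz => /eqP e; apply/eqP/malgP => k.
transitivity (0 : K); last by symmetry; exact: mcoeff0.
apply: mcoeff_outdom.
by rewrite -[k \in msupp f]/(k \in (msupp f : seq _)) e.
Qed.

Lemma xlead_ex f : f != 0 -> exists u, is_xlead f u.
Proof.
move=> nz; case: (exists_max (@xlt_irr n m) (@xlt_trans n m) (@xlt_total n m) (msupp_neq nz)).
by move=> u uin hu; exists u; split.
Qed.

Lemma dlead_ex f : f != 0 -> exists u, is_dlead f u.
Proof.
move=> nz; case: (exists_max (@dlt_irr n m) (@dlt_trans n m) (@dlt_total n m) (msupp_neq nz)).
by move=> u uin hu; exists u; split.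
Qed.

Lemma xlead_lead f u : is_xlead f u -> lead f u f@_u.
Proof.
move=> [uin hu]; split; first by [].
move=> t tu nlt; apply: mcoeff_outdom; apply/negP => tin.
by move: nlt; rewrite hu.
Qed.

Lemma mcB f g c t : (f - c *: g)@_t = f@_t - c * g@_t.
Proof.
transitivity (f@_t - (c *: g)@_t); first exact: mcoeffB.
congr (_ - _); exact: mcoeffZ.
Qed.

Lemma wact_mono (c : K) (th : mon n) f : wact (c *: << th >>) f = c *: mact th f.
Proof.
rewrite /wact; case: (eqVneq c 0) => [->|cnz].
  have -> : msupp ((0 : K) *: (<< th >> : weyl K n)) = fset0.
    transitivity (msupp (0 : weyl K n)); last exact: msupp0.
    congr msupp; exact: scale0r.
  by rewrite big_seq_fset0 scale0r.
have -> : msupp (c *: (<< th >> : weyl K n)) = [fset th]%fset.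
  transitivity (msupp (<< th >> : weyl K n)).
    have := msuppZ c (<< th >> : weyl K n); move=> ->; rewrite (negPf cnz); reflexivity.
  have := msuppU th (1 : K); move=> ->; rewrite oner_eq0; reflexivity.
rewrite big_seq_fset1.
have -> : (c *: (<< th >> : weyl K n))@_th = c.
  transitivity (c * (<< th >> : weyl K n)@_th); first exact: mcoeffZ.
  have -> : (<< th >> : weyl K n)@_th = 1 by exact: mcoeffUU.
  exact: mulr1.
reflexivity.
Qed.

Lemma sub_closed (N : E K n m -> Prop) f g (c : K) th :
  is_submodule N -> N f -> N g -> N (f + c *: mact th g).
Proof.
case=> _ hD hW nf ng; apply: hD nf _; rewrite -wact_mono; exact: hW.
Qed.

End Main.

Section Final.
Variables (K : fieldType) (n m : nat).
Local Open Scope ring_scope.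
Implicit Types (f g h : E K n m).

Lemma addv_subv (a b : expv n) : lev b a -> addv (subv a b) b = a.
Proof.
move=> /forallP h; apply: eq_from_tnth => i.
by rewrite tnth_addv tnth_subv subnK.
Qed.

Lemma tmul_tquot (u w : term n m) : tdvd u w -> tmul (tquot w u) u = w.
Proof.
case/and3P => /eqP e2 l1 l2; rewrite /tmul /tquot /= !addv_subv // e2.
by case: w {e2 l1 l2} => [[]].
Qed.

Lemma absv_le (a b : expv n) : lev b a -> (absv b <= absv a)%N.
Proof. by move=> /forallP h; apply: leq_sum => i _. Qed.

Lemma ordd_tmul (th : mon n) (v : term n m) : ordd (tmul th v) = (absv th.2 + ordd v)%N.
Proof. by rewrite /ordd /tmul /= absv_addv. Qed.

Lemma ordd_cond (ug vg uf vf : term n m) : tdvd ug uf ->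
  (dval ug vg <= dval uf vf)%R -> (ordd (tmul (tquot uf ug) vg) <= ordd vf)%N.
Proof.
case/and3P => _ _ l2; rewrite /dval ordd_tmul /tquot /= absv_subv //.
have := absv_le l2; rewrite -/(ordd uf) -/(ordd ug).
move=> hle hd; lia.
Qed.

End Final.

Section Final2.
Variables (K : fieldType) (n m : nat).
Local Open Scope ring_scope.
Implicit Types (f g h : E K n m).

Lemma nz_of_supp f (u : term n m) : u \in msupp f -> f != 0.
Proof.
move=> uin; apply/negP => /eqP e; move: uin; rewrite -mcoeff_neq0 e.
by rewrite mcoeff0 eqxx.
Qed.

Lemma step_exists (N : E K n m -> Prop) G : is_submodule N -> is_xd_groebner N G ->
  forall f uf, N f -> is_xlead f uf ->
  exists g, exists h, [/\ g \in G, xd_step g f h, N h & forall t, t \in msupp h -> xlt t uf].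
Proof.
move=> hN [hG1 hG2] f uf nf xf.
have fnz : f != 0 := nz_of_supp xf.1.
have [vf df] := dlead_ex fnz.
have [g gin hg] := hG2 f nf fnz.
have [gnz ng] := hG1 g gin.
have [ug xg] := xlead_ex gnz.
have [vg dg] := dlead_ex gnz.
have [hdiv hd] := hg ug vg uf vf xg dg xf df.
pose th := tquot uf ug.
pose c := f@_uf * (g@_ug)^-1.
exists g, (f - c *: mact th g); split.
- exact: gin.
- split; first exact: gnz.
  exists ug, vg, vf, uf; split; first by split.
  split; [exact: xf.1 | exact: hdiv | exact: ordd_cond hdiv hd | reflexivity].
- have e : f + (- c) *: mact th g = f - c *: mact th g by rewrite scaleNr.
  rewrite -e; exact: sub_closed hN nf ng.
- move=> t tin.
  have hl := lead_mact th (xlead_lead xg).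
  rewrite /th tmul_tquot in hl; last exact: hdiv.
  case: hl => hl1 hl2.
  have gu : g@_ug != 0 by rewrite mcoeff_neq0; exact: xg.1.
  apply/negPn/negP => nlt.
  move: tin; rewrite -mcoeff_neq0 mcB; case: (eqVneq t uf) => [->|tu].
    by rewrite hl1 /c -mulrA mulVf // mulr1 subrr eqxx.
  by rewrite (hl2 _ tu nlt) ((xlead_lead xf).2 _ tu nlt) mulr0 subrr eqxx.
Qed.

Lemma red_aux (N : E K n m -> Prop) G : is_submodule N -> is_xd_groebner N G ->
  forall u, Acc (@xlt n m) u -> forall f, N f -> is_xlead f u -> xd_reduces G f 0.
Proof.
move=> hN hG u acc; elim: acc => u0 _ IH f nf xf.
have [g [h [gin st nh hlt]]] := step_exists hN hG nf xf.
apply: (xd_red_step gin st).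
case: (eqVneq h 0) => [->|hnz]; first exact: xd_red_refl.
have [uh xh] := xlead_ex hnz.
exact: (IH uh (hlt _ xh.1) h nh xh).
Qed.

Lemma red_sound (N : E K n m -> Prop) G : is_submodule N -> is_xd_groebner N G ->
  forall f h, xd_reduces G f h -> N h -> N f.
Proof.
move=> hN [hG1 _] f h; elim=> [f0 //|f0 f' h0 g gin st _ IH] nh.
have nf' := IH nh.
case: st => _ [ug [vg [vf [w [_ [_ _ _ e]]]]]].
have -> : f0 = f' + (f0@_w * (g@_ug)^-1) *: mact (tquot w ug) g by rewrite e subrK.
exact: sub_closed hN nf' (hG1 g gin).2.
Qed.

End Final2.

Theorem theorem4p8 (K : fieldType) (charK0 : [pchar K]%R =i pred0) (n m : nat)
    (N : E K n m -> Prop) (G : seq (E K n m)) :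
  is_submodule N -> is_xd_groebner N G ->
  (forall f : E K n m, N f <-> xd_reduces G f 0%R) /\
  (forall f : E K n m, N f -> xd_reduced_set f G -> f = 0%R).
Proof.
move=> hN hG; split.
  move=> f; split.
    move=> nf; case: (eqVneq f 0%R) => [->|fnz]; first exact: xd_red_refl.
    have [u xu] := xlead_ex fnz.
    exact: (red_aux hN hG (xlt_acc u) nf xu).
  move=> r; apply: (red_sound hN hG r); by case: hN.
move=> f nf hred; apply/eqP/negP => /negP fnz.
have [uf xf] := xlead_ex fnz.
have [vf df] := dlead_ex fnz.
case: hG => hG1 hG2.
have [g gin hg] := hG2 f nf fnz.
have [gnz _] := hG1 g gin.
have [ug xg] := xlead_ex gnz.
have [vg dg] := dlead_ex gnz.
have [hdiv hd] := hg ug vg uf vf xg dg xf df.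
apply: (hred g gin ug vg vf xg dg df).
exists (tquot uf ug); split; first by rewrite tmul_tquot //; exact: xf.1.
exact: ordd_cond hdiv hd.
Qed.
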